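(* Let $G$ be a finite Coxeter group acting by its geometric realisation on a Euclidean space $V$, with set of simple reflections $S$ and simple roots $e_s$, $s\in S$. Let $J\subset S$ satisfy the $(-1)$-condition and let $\sigma_J$ be the corresponding involution. Then the centraliser $C(\sigma_J)=\{g\in G: g\sigma_J=\sigma_J g\}$ coincides with the normaliser $N(G_J)=\{g\in G: gG_Jg^{-1}=G_J\}$ of the parabolic subgroup $G_J$.
   Context: For $J\subset S$, $G_J$ is the subgroup generated by $J$ and $V_J$ is the subspace of $V$ spanned by $\{e_s: s\in J\}$. $J$ satisfies the $(-1)$-condition if $G_J$ contains an element $\sigma_J$ acting on $V_J$ as $-\mathrm{Id}$; this element acts as the identity on $V_J^\perp$, is uniquely determined and is an involution. *)

(* Defs.v *)
From HB Require Import structures.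
From mathcomp Require Import all_boot all_order all_algebra.
From mathcomp Require Import reals trigo.
Set Implicit Arguments. Unset Strict Implicit. Unset Printing Implicit Defensive.
Import Order.TTheory GRing.Theory Num.Theory.
Local Open Scope ring_scope.

(* Coxeter matrix on S = 'I_n (entries finite: a finite Coxeter group has
   all m_st finite). *)
Definition coxeter_matrix (n : nat) (m : 'I_n -> 'I_n -> nat) : Prop :=
  (forall s, m s s = 1%N) /\ (forall s t, m s t = m t s) /\
  (forall s t, s != t -> (2 <= m s t)%N).

(* Bilinear form of the geometric realisation on V = R^S (basis e_s =
   standard basis row vectors): B(e_s, e_t) = - cos (pi / m_st). *)
Definition coxB (R : realType) (n : nat) (m : 'I_n -> 'I_n -> nat) : 'M[R]_n :=
  \matrix_(s, t) - cos (pi / (m s t)%:R).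

Definition root_e (R : realType) (n : nat) (s : 'I_n) : 'rV[R]_n :=
  delta_mx 0 s.

(* Simple reflection sigma_s, acting on row vectors on the right:
   v *m refl s = v - 2 B(v, e_s) e_s. *)
Definition refl (R : realType) (n : nat) (m : 'I_n -> 'I_n -> nat) (s : 'I_n)
  : 'M[R]_n :=
  1%:M - 2%:R *: (col s (coxB R m) *m root_e R s).

(* Elements of the subgroup G_J generated by {sigma_s : s in J}
   (products of words in the involutive generators). G = G_S. *)
Definition inGJ (R : realType) (n : nat) (m : 'I_n -> 'I_n -> nat)
  (J : {set 'I_n}) (g : 'M[R]_n) : Prop :=
  exists w : seq 'I_n, all (fun s => s \in J) w /\
    g = \prod_(s <- w) refl R m s.

Definition inG (R : realType) (n : nat) (m : 'I_n -> 'I_n -> nat)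
  (g : 'M[R]_n) : Prop := inGJ m [set: 'I_n] g.

Definition finite_coxeter (R : realType) (n : nat) (m : 'I_n -> 'I_n -> nat)
  : Prop := exists l : seq 'M[R]_n, forall g, inG m g -> g \in l.

(* V_J = span of e_s, s in J = vectors supported on J. *)
Definition in_VJ (R : realType) (n : nat) (J : {set 'I_n}) (v : 'rV[R]_n)
  : Prop := forall s, s \notin J -> v 0 s = 0.

Definition is_sigmaJ (R : realType) (n : nat) (m : 'I_n -> 'I_n -> nat)
  (J : {set 'I_n}) (sigma : 'M[R]_n) : Prop :=
  inGJ m J sigma /\ forall v, in_VJ J v -> v *m sigma = - v.

(* Main.v *)
Require Import Defs.
From HB Require Import structures.
From mathcomp Require Import all_boot all_order all_algebra.
From mathcomp Require Import reals trigo.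
From Stdlib Require Classical_Prop.
From mathcomp Require Import ring lra zify.
Import Order.TTheory GRing.Theory Num.Theory.
Local Open Scope ring_scope.
Set Implicit Arguments. Unset Strict Implicit. Unset Printing Implicit Defensive.

Lemma ex_min (P : nat -> Prop) k : P k -> exists j, P j /\ forall i, P i -> (j <= i)%N.
Proof.
elim/ltn_ind: k => k IH Pk.
case: (Classical_Prop.classic (exists i, (i < k)%N /\ P i)) => [[i [ik Pi]]|H].
  exact: IH ik Pi.
exists k; split => // i Pi; rewrite leqNgt; apply/negP => ik; apply: H; by exists i.
Qed.

Section Cox.
Variables (R : realType) (n : nat) (m : 'I_n -> 'I_n -> nat).
Hypothesis Hm : coxeter_matrix m.

Local Notation B := (coxB R m).
Local Notation r := (refl R m).
Local Notation e := (@root_e R n).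
Definition bf (v w : 'rV[R]_n) : R := (v *m B *m w^T) 0 0.
Definition P (w : seq 'I_n) : 'M[R]_n := \prod_(s <- w) r s.

Lemma m_sym s t : m s t = m t s. Proof. by case: Hm => _ [H _]. Qed.

Lemma B_tr : B^T = B.
Proof. by apply/matrixP => i j; rewrite !mxE m_sym. Qed.

Lemma Bss s : B s s = 1.
Proof. case: Hm => H _; by rewrite mxE H divr1 cospi opprK. Qed.

Lemma Bst s t : B s t = - cos (pi / (m s t)%:R).
Proof. by rewrite mxE. Qed.

Lemma bf_sym v w : bf v w = bf w v.
Proof.
rewrite /bf; have -> : (v *m B *m w^T) 0 0 = ((v *m B *m w^T)^T) 0 0 by rewrite [RHS]mxE.
by rewrite !trmx_mul trmxK B_tr mulmxA.
Qed.

Lemma bfE v s : bf v (e s) = (v *m B) 0 s.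
Proof.
rewrite /bf /root_e trmx_delta mxE (bigD1 s) //= big1 => [|j /negbTE js].
  by rewrite [delta_mx _ _ _ _]mxE !eqxx mulr1 addr0.
by rewrite [delta_mx _ _ _ _]mxE js mulr0.
Qed.

Lemma bfDl u v w : bf (u + v) w = bf u w + bf v w.
Proof. by rewrite /bf !mulmxDl mxE. Qed.
Lemma bfZl a v w : bf (a *: v) w = a * bf v w.
Proof. by rewrite /bf -!scalemxAl mxE. Qed.
Lemma bfNl v w : bf (- v) w = - bf v w.
Proof. by rewrite -scaleN1r bfZl mulN1r. Qed.
Lemma bfBl u v w : bf (u - v) w = bf u w - bf v w.
Proof. by rewrite bfDl bfNl. Qed.
Lemma bfDr u v w : bf w (u + v) = bf w u + bf w v.
Proof. by rewrite bf_sym bfDl !(bf_sym w). Qed.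
Lemma bfZr a v w : bf w (a *: v) = a * bf w v.
Proof. by rewrite bf_sym bfZl bf_sym. Qed.
Lemma bfNr v w : bf w (- v) = - bf w v.
Proof. by rewrite bf_sym bfNl bf_sym. Qed.
Lemma bfBr u v w : bf w (u - v) = bf w u - bf w v.
Proof. by rewrite bfDr bfNr. Qed.

Lemma bf_ee s t : bf (e s) (e t) = B s t.
Proof.
rewrite bfE /root_e mxE (bigD1 s) //= big1 => [|j /negbTE js].
  by rewrite [_ 0 s]mxE !eqxx mul1r addr0.
by rewrite [_ 0 j]mxE eqxx /= js mul0r.
Qed.

Lemma bf_ess s : bf (e s) (e s) = 1.
Proof. by rewrite bf_ee Bss. Qed.

Lemma refl_act v s : v *m r s = v - (2 * bf v (e s)) *: e s.
Proof.
rewrite /refl mulmxBr mulmx1 -scalemxAr mulmxA colE -trmx_delta -/(@root_e R n s).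
rewrite mulmxA [v *m B *m _]mx11_scalar mul_scalar_mx scalerA.
by rewrite /bf.
Qed.

Lemma refl_e s : e s *m r s = - e s.
Proof. rewrite refl_act bf_ess mulr1 scaler_nat. by rewrite mulr2n opprD addrA subrr add0r. Qed.

Lemma mx_rowsP (A C : 'M[R]_n) : (forall v : 'rV_n, v *m A = v *m C) -> A = C.
Proof. move=> H; apply/row_matrixP => i; by rewrite !rowE H. Qed.

Lemma refl_invol s : r s *m r s = 1%:M.
Proof.
apply: mx_rowsP => v; rewrite mulmxA mulmx1 (refl_act v) mulmxBl -scalemxAl refl_e.
by rewrite (refl_act v) scalerN opprK subrK.
Qed.

Lemma bf_refl v w s : bf (v *m r s) (w *m r s) = bf v w.
Proof.
rewrite !refl_act !bfBl !bfBr !bfZl !bfZr bf_ess (bf_sym (e s) w).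
ring.
Qed.

Lemma P_nil : P [::] = 1%:M. Proof. by rewrite /P big_nil. Qed.
Lemma P_cons a w : P (a :: w) = r a *m P w. Proof. by rewrite /P big_cons. Qed.
Lemma P_cat u w : P (u ++ w) = P u *m P w. Proof. by rewrite /P big_cat. Qed.
Lemma P_rcons w a : P (rcons w a) = P w *m r a.
Proof. by rewrite -cats1 P_cat P_cons P_nil mulmx1. Qed.
Lemma P1 a : P [:: a] = r a. Proof. by rewrite P_cons P_nil mulmx1. Qed.

Lemma P_revK w : P (rev w) *m P w = 1%:M.
Proof.
elim: w => [|a w IH]; first by rewrite P_nil mulmx1.
by rewrite rev_cons P_rcons P_cons -mulmxA (mulmxA (r a)) refl_invol mul1mx IH.
Qed.

Lemma P_Krev w : P w *m P (rev w) = 1%:M.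
Proof. by rewrite -{1}(revK w) P_revK. Qed.

Lemma bf_P v u w : bf (v *m P w) (u *m P w) = bf v u.
Proof.
elim: w v u => [|a w IH] v u; first by rewrite P_nil !mulmx1.
by rewrite P_cons !mulmxA IH bf_refl.
Qed.

Lemma invmx_P w : invmx (P w) = P (rev w).
Proof.
have [U _] := mulmx1_unit (P_Krev w).
by rewrite -[LHS]mulmx1 -(P_Krev w) mulmxA mulVmx // mul1mx.
Qed.


Section VJ.
Variable J : {set 'I_n}.
Implicit Types u v : 'rV[R]_n.
Implicit Types g sigma : 'M[R]_n.

Lemma VJD u v : in_VJ J u -> in_VJ J v -> in_VJ J (u + v).
Proof. by move=> Hu Hv s sJ; rewrite mxE Hu // Hv // addr0. Qed.
Lemma VJZ a v : in_VJ J v -> in_VJ J (a *: v).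
Proof. by move=> Hv s sJ; rewrite mxE Hv // mulr0. Qed.
Lemma VJN v : in_VJ J v -> in_VJ J (- v).
Proof. by move=> Hv s sJ; rewrite mxE Hv // oppr0. Qed.
Lemma VJB u v : in_VJ J u -> in_VJ J v -> in_VJ J (u - v).
Proof. by move=> Hu Hv; apply: VJD => //; apply: VJN. Qed.
Lemma VJ_e s : s \in J -> in_VJ J (e s).
Proof.
move=> sJ t tJ; rewrite mxE /=; case: eqP => // ts; by rewrite ts sJ in tJ.
Qed.

Lemma GJ_move w v : all (fun s => s \in J) w -> in_VJ J (v *m P w - v).
Proof.
elim: w v => [|a w IH] v /=; first by rewrite P_nil mulmx1 subrr; move=> t tJ; rewrite mxE.
case/andP => aJ wJ; rewrite P_cons mulmxA.
have -> : v *m r a *m P w - v = (v *m r a *m P w - v *m r a) + (v *m r a - v) by rewrite addrA subrK.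
apply: VJD; first exact: IH.
rewrite refl_act addrC addKr; apply/VJN/VJZ/VJ_e => //.
Qed.

Lemma GJ_fix w v : all (fun s => s \in J) w -> (forall s, s \in J -> bf v (e s) = 0) ->
  v *m P w = v.
Proof.
move=> + H; elim: w => [|a w IH] /=; first by rewrite P_nil mulmx1.
case/andP => aJ wJ; by rewrite P_cons mulmxA refl_act H // mulr0 scale0r subr0 IH.
Qed.

Lemma neg_VJ w v : all (fun s => s \in J) w -> v *m P w = - v -> in_VJ J v.
Proof.
move=> wJ H; have := GJ_move v wJ; rewrite H.
have -> : - v - v = (- 2%:R) *: v by rewrite scaleNr scaler_nat mulr2n opprD.
move/(VJZ (- 2%:R)^-1); rewrite scalerA mulVf ?scale1r //.
by rewrite oppr_eq0 pnatr_eq0.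
Qed.

Lemma GJ_mul (g1 g2 : 'M[R]_n) : inGJ m J g1 -> inGJ m J g2 -> inGJ m J (g1 *m g2).
Proof.
move=> [w1 [H1 ->]] [w2 [H2 ->]]; exists (w1 ++ w2); split.
  by rewrite all_cat H1 H2.
by rewrite big_cat.
Qed.

Lemma GJ_r s : s \in J -> inGJ m J (r s).
Proof. move=> sJ; exists [:: s]; by rewrite /= sJ big_seq1. Qed.

Lemma dir2 sigma g : is_sigmaJ m J sigma -> inG m g ->
  (forall h : 'M[R]_n, inGJ m J h <->
       exists h' : 'M[R]_n, inGJ m J h' /\ h = g *m h' *m invmx g) ->
  g *m sigma = sigma *m g.
Proof.
move=> [[ws [wsJ sE]] sneg] [wg [_ gE]] Hiff.
rewrite -/(P ws) in sE; rewrite -/(P wg) in gE.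
have ginv : invmx g = P (rev wg) by rewrite gE invmx_P.
have [wt [wtJ tE]] : inGJ m J (g *m sigma *m invmx g).
  by apply/Hiff; exists sigma; split => //; exists ws.
rewrite -/(P wt) in tE.
have [h' [[wh [whJ hE]] sh]] := (proj1 (Hiff sigma)) (ex_intro _ ws (conj wsJ sE)).
rewrite -/(P wh) in hE.
have h'E : h' = P (rev wg) *m sigma *m g.
  by rewrite sh ginv gE !mulmxA P_revK mul1mx -mulmxA P_revK mulmx1.
have VJg u : in_VJ J u -> in_VJ J (u *m g).
  move=> Hu; apply: (@neg_VJ wh) => //; rewrite -hE h'E gE !mulmxA -(mulmxA u) P_Krev mulmx1.
  by rewrite -gE sneg // mulNmx.
have tneg u : in_VJ J u -> u *m P wt = - u.
  move=> Hu; rewrite -tE ginv !mulmxA (sneg _ (VJg _ Hu)) mulNmx gE -mulmxA P_Krev mulmx1 //.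
have sfix v : forall s, s \in J -> bf (v + v *m sigma) (e s) = 0.
  move=> s sJ; rewrite bfDl.
  have es : e s *m sigma = - e s by apply: sneg; apply: VJ_e.
  have : bf (v *m sigma) (e s *m sigma) = bf v (e s) by rewrite sE bf_P.
  by rewrite es bfNr => /eqP; rewrite eqr_oppLR => /eqP ->; rewrite subrr.
have tsig : g *m sigma *m invmx g = sigma.
  apply: mx_rowsP => v.
  have HJ : in_VJ J (v - v *m sigma).
    by move: (VJN (GJ_move v wsJ)); rewrite opprB sE.
  have Hb := sfix v.
  move: HJ Hb; set a := v - v *m sigma; set b := v + v *m sigma => HJ Hb.
  have dec : v = (2%:R^-1) *: (a + b).
    rewrite /a /b addrACA addNr addr0 -mulr2n -scaler_nat scalerA mulVf ?scale1r //.
    by rewrite pnatr_eq0.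
  clearbody a b.
  rewrite [in LHS]dec [in RHS]dec -!scalemxAl !mulmxDl tE tneg // sneg //.
  by rewrite (GJ_fix wtJ Hb) sE (GJ_fix wsJ Hb).
by rewrite -[in RHS]tsig ginv -mulmxA gE P_revK mulmx1.
Qed.

End VJ.


Fixpoint alt (a b : 'I_n) (j : nat) : seq 'I_n :=
  if j is j'.+1 then a :: alt b a j' else [::].

Lemma size_alt a b j : size (alt a b j) = j.
Proof. by elim: j a b => //= j IH a b; rewrite IH. Qed.

Lemma all_alt a b j : all (fun x => x \in [set a; b]) (alt a b j).
Proof.
elim: j a b => //= j IH a b; rewrite !inE eqxx /=.
by rewrite setUC; apply: IH.
Qed.

Lemma alt_add a b i j :
  alt a b (i + j) = alt a b i ++ (if odd i then alt b a j else alt a b j).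
Proof.
elim: i a b => //= i IH a b; rewrite IH; by case: (odd i).
Qed.

Lemma alt_rcons a b j : alt a b j.+1 = rcons (alt a b j) (if odd j then b else a).
Proof. by rewrite -addn1 alt_add -cats1; case: (odd j). Qed.

Lemma e_refl_other x y : x != y ->
  e x *m r y = e x + (2 * cos (pi / (m x y)%:R)) *: e y.
Proof. by move=> _; rewrite refl_act bf_ee Bst mulrN scaleNr opprK. Qed.

Section Dihedral.
Variables (a b : 'I_n).
Hypothesis hab : a != b.
Hypothesis mab2 : (2 <= m a b)%N.
Let th : R := pi / (m a b)%:R.

Lemma sin_rec j : sin ((j.+2)%:R * th) = 2 * cos th * sin ((j.+1)%:R * th) - sin (j%:R * th).
Proof.
have -> : (j.+2)%:R * th = (j.+1)%:R * th + th by rewrite -natr1 mulrDl mul1r.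
have -> : j%:R * th = (j.+1)%:R * th - th by rewrite -natr1 mulrDl mul1r addrK.
rewrite sinD sinB; ring.
Qed.

Lemma alt_vec j : sin th *: (e a *m P (alt b a j)) =
  sin ((j.+1)%:R * th) *: (if odd j then e b else e a) +
  sin (j%:R * th) *: (if odd j then e a else e b).
Proof.
elim: j => [|j IH].
  by rewrite /= P_nil mulmx1 mul1r mul0r sin0 scale0r addr0.
rewrite alt_rcons P_rcons mulmxA scalemxAl IH mulmxDl -!scalemxAl.
have hba : b != a by rewrite eq_sym.
rewrite sin_rec /=; case: (odd j) => /=.
- rewrite refl_e (e_refl_other hba) m_sym -/th.
  apply/rowP => i; rewrite !mxE; ring.
- rewrite refl_e (e_refl_other hab) -/th.
  apply/rowP => i; rewrite !mxE; ring.
Qed.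


Lemma k_gt0 : (0 < m a b)%N.
Proof. exact: leq_trans _ mab2. Qed.
Lemma th_gt0 : 0 < th.
Proof. by rewrite /th divr_gt0 ?pi_gt0 // ltr0n k_gt0. Qed.
Lemma th_lt : th < pi.
Proof. by rewrite /th ltr_pdivrMr ?ltr0n ?k_gt0 // ltr_pMr ?pi_gt0 // ltr1n. Qed.
Lemma sth : 0 < sin th.
Proof. by apply: sin_gt0_pi; rewrite th_gt0 th_lt. Qed.
Lemma kth : (m a b)%:R * th = pi.
Proof. by rewrite /th mulrC divfK // pnatr_eq0 -lt0n k_gt0. Qed.
Lemma sinj_ge0 j : (j <= m a b)%N -> 0 <= sin (j%:R * th).
Proof.
move=> jk; apply: sin_ge0_pi; rewrite mulr_ge0 ?ler0n ?(ltW th_gt0) //=.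
by rewrite -kth ler_pM2r ?th_gt0 // ler_nat.
Qed.

Lemma braid_vec : e a *m P (alt a b (m a b)) = e a *m P (alt b a (m a b)).
Proof.
have [k' Ek] : exists k', m a b = k'.+1 by exists (m a b).-1; rewrite prednK // k_gt0.
have h1 := alt_vec k'; have h2 := alt_vec k'.+1.
have s1 : sin ((k'.+1)%:R * th) = 0 by rewrite -Ek kth sinpi.
have s0 : sin (k'%:R * th) = sin th.
  have -> : k'%:R * th = pi - th by rewrite -kth Ek -natr1 mulrDl mul1r addrK.
  by rewrite sinB sinpi cospi; ring.
have s2 : sin ((k'.+2)%:R * th) = - sin th.
  have -> : (k'.+2)%:R * th = pi + th by rewrite -kth Ek -natr1 mulrDl mul1r.
  by rewrite sinD sinpi cospi; ring.
rewrite s1 s0 in h1; rewrite s2 s1 in h2.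
rewrite Ek /= P_cons mulmxA refl_e mulNmx.
have sth0 : sin th != 0 by rewrite gt_eqF ?sth.
apply: (scalerI sth0); rewrite scalerN h1 h2 /=.
case: (odd k') => /=; apply/rowP => i; rewrite !mxE; ring.
Qed.

End Dihedral.


Lemma m2 s t : s != t -> (2 <= m s t)%N.
Proof. by case: Hm => _ [_ H]; apply: H. Qed.

Lemma braid a b : a != b -> P (alt a b (m a b)) = P (alt b a (m a b)).
Proof.
move=> hab; have hba : b != a by rewrite eq_sym.
have mab := m2 hab; have mba := m2 hba.
have bv1 := braid_vec hab mab; have bv2 := braid_vec hba mba.
rewrite (m_sym b a) in bv2.
apply: mx_rowsP => v.
pose c : R := cos (pi / (m a b)%:R).
have hc : 1 - c ^+ 2 != 0.
  by rewrite /c -sin2cos2 expf_neq0 // gt_eqF // sth.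
pose al := bf v (e a); pose be := bf v (e b).
pose x := (al + c * be) / (1 - c ^+ 2); pose y := (be + c * al) / (1 - c ^+ 2).
pose q := v - x *: e a - y *: e b.
have dec : v = x *: e a + y *: e b + q.
  by rewrite /q; apply/rowP => i; rewrite !mxE; ring.
have qa : bf q (e a) = 0.
  rewrite /q !bfBl !bfZl bf_ess bf_ee Bst m_sym -/c -/al /x /y; field => //.
have qb : bf q (e b) = 0.
  rewrite /q !bfBl !bfZl bf_ess bf_ee Bst -/c -/be /x /y; field => //.
have qfix w : all (fun z => z \in [set a; b]) w -> q *m P w = q.
  move=> Hw; apply: (GJ_fix Hw) => z; rewrite !inE => /orP[] /eqP -> //.
clearbody q.
rewrite [in LHS]dec [in RHS]dec !mulmxDl -!scalemxAl bv1 bv2 !qfix //.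
- by rewrite setUC all_alt.
- by rewrite all_alt.
Qed.


Definition Iw a b (w : seq 'I_n) := all (fun z => z \in [set a; b]) w.
Definition Ired a b w := forall w', Iw a b w' -> P w' = P w -> (size w <= size w')%N.

Lemma Iw_sym a b w : Iw a b w = Iw b a w.
Proof. by rewrite /Iw setUC. Qed.
Lemma Ired_sym a b w : Ired a b w -> Ired b a w.
Proof. by move=> H w'; rewrite Iw_sym; apply: H. Qed.
Lemma Iw_alt a b j : Iw a b (alt a b j).
Proof. exact: all_alt. Qed.
Lemma Iw_alt' a b j : Iw a b (alt b a j).
Proof. rewrite Iw_sym; exact: all_alt. Qed.

Lemma alt_of_red u : forall t s, Iw t s (t :: u) -> Ired t s (t :: u) ->
  t :: u = alt t s (size u).+1.
Proof.
elim: u => [|y u IH] t s //= Hw Hr.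
move: (Hw) => /= /and3P [_ Hy Hu].
move: Hy; rewrite !inE => /orP [/eqP Ey | /eqP Ey]; subst y.
  have := Hr u Hu; rewrite !P_cons mulmxA refl_invol mul1mx => /(_ erefl).
  by move=> /= H; exfalso; lia.
rewrite (IH s t) //.
- by rewrite Iw_sym; move: Hu; rewrite /Iw /= !inE eqxx orbT => ->.
- move=> w' Hw' HP; have := Hr (t :: w').
  rewrite /Iw /= !inE eqxx /= P_cons HP -P_cons ltnS; apply=> //.
  by rewrite -/(Iw t s w') Iw_sym.
Qed.

Lemma dihedral s t u : s != t -> Iw s t u -> Ired s t u ->
  (forall u', Iw s t u' -> P u' = r s *m P u -> (size u <= size u')%N) ->
  exists al be, 0 <= al /\ 0 <= be /\ e s *m P u = al *: e s + be *: e t.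
Proof.
move=> hst Hw Hr H2.
case: u Hw Hr H2 => [|x u] Hw Hr H2.
  by exists 1, 0; rewrite P_nil mulmx1 scale1r scale0r addr0 ler01 lexx.
move: (Hw) => /= /andP [Hx Hu].
move: Hx; rewrite !inE => /orP [/eqP Ex | /eqP Ex]; subst x.
  have := H2 u Hu; rewrite P_cons mulmxA refl_invol mul1mx => /(_ erefl).
  by move=> /= H; exfalso; lia.
have hts : t != s by rewrite eq_sym.
have Hw' : Iw t s (t :: u) by rewrite Iw_sym.
have Eu := alt_of_red Hw' (Ired_sym Hr).
move: Eu H2; set k := (size u).+1 => Eu H2; rewrite Eu.
have mst := m2 hst.
case: (ltnP k (m s t)) => hk.
- have hv := alt_vec hst k.
  set th := pi / (m s t)%:R in hv *.
  have sth0 : sin th != 0 by rewrite gt_eqF // sth.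
  have s1 := sinj_ge0 mst hk.
  have s0 := sinj_ge0 mst (ltnW hk).
  have st := sth mst; rewrite -/th in s1 s0 st.
  exists ((if odd k then sin (k%:R * th) else sin (k.+1%:R * th)) / sin th).
  exists ((if odd k then sin (k.+1%:R * th) else sin (k%:R * th)) / sin th).
  split; first by case: (odd k); rewrite divr_ge0 // ltW.
  split; first by case: (odd k); rewrite divr_ge0 // ltW.
  apply: (scalerI sth0); rewrite hv.
  by case: (odd k); apply/rowP => i; rewrite !mxE; field.
- exfalso.
  set M := m s t in hk mst.
  have [M' EM] : exists M', M = M'.+1 by exists M.-1; rewrite prednK // (leq_trans _ mst).
  set rest := (if odd M then alt s t (k - M) else alt t s (k - M)).
  have Hsplit : alt t s k = alt t s M ++ rest by rewrite -alt_add subnKC.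
  have hb := braid hts; rewrite (m_sym t s) -/M in hb.
  have := H2 (alt t s M' ++ rest).
  have -> : Iw s t (alt t s M' ++ rest).
    by rewrite /Iw all_cat -!/(Iw _ _ _) Iw_alt' /rest; case: (odd M); rewrite ?Iw_alt ?Iw_alt'.
  have srest : size rest = (k - M)%N by rewrite /rest; case: (odd M); rewrite size_alt.
  rewrite Eu Hsplit !P_cat hb EM /= P_cons !mulmxA refl_invol mul1mx.
  move=> /(_ erefl erefl); rewrite !size_cat !size_alt srest.
  move: EM hk; clearbody M; lia.
Qed.


Definition reduced w := forall w', P w' = P w -> (size w <= size w')%N.
Definition sgood s w := forall w', P w' = r s *m P w -> (size w <= size w')%N.
Definition nonneg (v : 'rV[R]_n) := forall i, 0 <= v 0 i.
Definition nonpos (v : 'rV[R]_n) := forall i, v 0 i <= 0.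

Lemma nonneg_e s : nonneg (e s).
Proof. by move=> i; rewrite mxE ler0n. Qed.

Lemma tits k : forall s w, size w = k -> reduced w -> sgood s w -> nonneg (e s *m P w).
Proof.
elim/ltn_ind: k => k IH s w Hk Hred Hg.
case: w Hk Hred Hg => [|t w0] Hk Hred Hg.
  by rewrite P_nil mulmx1; apply: nonneg_e.
have hts : t != s.
  apply/eqP => ets; subst t; have := Hg w0.
  rewrite P_cons mulmxA refl_invol mul1mx => /(_ erefl) /=; lia.
have hst : s != t by rewrite eq_sym.
pose A b := exists u x, Iw s t u /\ P (t :: w0) = P u *m P x /\
  (size u + size x = size (t :: w0))%N /\ size x = b.
have A0 : A (size w0).
  exists [:: t], w0; split; first by rewrite /Iw /= !inE eqxx orbT.
  by rewrite P_cons P1.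
have [b [[u [x [Hu [HP [Hs Hb]]]]] Hmin]] := ex_min A0.
subst b.
have hxk : (size x < k)%N.
  have := Hmin _ A0; rewrite -Hk /=; lia.
have Hredx : reduced x.
  move=> x' Hx'; rewrite leqNgt; apply/negP => lt.
  have := Hred (u ++ x'); rewrite P_cat Hx' -HP => /(_ erefl); rewrite size_cat; lia.
have Hgx y : y \in [set s; t] -> sgood y x.
  move=> Hy x' Hx'; rewrite leqNgt; apply/negP => lt.
  have HP' : P (t :: w0) = P (rcons u y) *m P x'.
    by rewrite P_rcons Hx' HP -mulmxA (mulmxA (r y)) refl_invol mul1mx.
  have := Hred (rcons u y ++ x'); rewrite P_cat -HP' => /(_ erefl).
  rewrite size_cat size_rcons => H1.
  have : A (size x').
    exists (rcons u y), x'; split; first by move: Hu; rewrite /Iw -cats1 all_cat /= Hy => ->.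
    split => //; split => //; rewrite size_rcons; move: H1 lt Hs; rewrite /=; lia.
  move/Hmin; lia.
have nxs := IH _ hxk s x erefl Hredx (Hgx s (setU11 _ _)).
have nxt := IH _ hxk t x erefl Hredx (Hgx t (setU1r _ (set11 _))).
have [al [be [al0 [be0 Heq]]]] : exists al be, 0 <= al /\ 0 <= be /\
    e s *m P u = al *: e s + be *: e t.
  apply: dihedral => //.
  - move=> u' Hu' HPu; have := Hred (u' ++ x); rewrite P_cat HPu -HP => /(_ erefl).
    rewrite size_cat; lia.
  - move=> u' Hu' HPu; have := Hg (u' ++ x); rewrite P_cat HPu -mulmxA -HP => /(_ erefl).
    rewrite size_cat; lia.
move=> i; rewrite HP mulmxA Heq mulmxDl -!scalemxAl.
have -> : (al *: (e s *m P x) + be *: (e t *m P x)) 0 i =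
  al * (e s *m P x) 0 i + be * (e t *m P x) 0 i by rewrite !mxE.
by apply: addr_ge0; apply: mulr_ge0.
Qed.


Lemma root_sign s w : nonneg (e s *m P w) \/ nonpos (e s *m P w).
Proof.
pose Q k := exists w1, P w1 = P w /\ size w1 = k.
have [k1 [[w1 [E1 S1]] M1]] := ex_min (ex_intro (fun w1 => P w1 = P w /\ size w1 = size w) w (conj erefl erefl) : Q (size w)).
have red1 : reduced w1.
  move=> w' H; rewrite S1; apply: M1; exists w'; split => //; by rewrite H.
case: (Classical_Prop.classic (sgood s w1)) => G1.
  by left; rewrite -E1; exact: (tits erefl red1 G1).
right.
pose Q2 k := exists w2, P w2 = r s *m P w1 /\ size w2 = k.
have Q20 : Q2 (size (s :: w1)) by exists (s :: w1); rewrite P_cons.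
have [k2 [[w2 [E2 S2]] M2]] := ex_min Q20.
have lt21 : (k2 < size w1)%N.
  rewrite ltnNge; apply/negP => le12; apply: G1 => w' Hw'.
  apply: (leq_trans le12); apply: M2; by exists w'.
have red2 : reduced w2.
  move=> w' H; rewrite S2; apply: M2; exists w'; split => //; by rewrite H.
have G2 : sgood s w2.
  move=> w' Hw'; rewrite S2 (leq_trans (ltnW lt21)) // S1; apply: M1; exists w'.
  by rewrite Hw' E2 mulmxA refl_invol mul1mx E1.
have := tits erefl red2 G2; rewrite E2 mulmxA refl_e mulNmx -E1 => H i.
by have := H i; rewrite mxE oppr_ge0.
Qed.

Definition ht (v : 'rV[R]_n) := \sum_i v 0 i.

Lemma ht_e u : ht (e u) = 1.
Proof.
rewrite /ht (bigD1 u) //= big1 => [|j /negbTE ju]; first by rewrite mxE !eqxx addr0.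
by rewrite mxE ju.
Qed.

Lemma ht_refl v u : ht (v *m r u) = ht v - 2 * bf v (e u).
Proof.
rewrite refl_act /ht.
have -> : \sum_i (v - (2 * bf v (e u)) *: e u) 0 i =
  \sum_i v 0 i - (2 * bf v (e u)) * \sum_i e u 0 i.
  by rewrite mulr_sumr -sumrB; apply: eq_bigr => i _; rewrite !mxE.
by rewrite -/(ht (e u)) ht_e mulr1.
Qed.

Lemma bf_self v : bf v v = \sum_u v 0 u * bf v (e u).
Proof.
rewrite /bf [in LHS]mxE; apply: eq_bigr => u _; rewrite [v^T u 0]mxE -/(bf v (e u)) bfE mulrC.
done.
Qed.

Lemma conjP s w v : v *m (P (rev w) *m r s *m P w) =
  v - (2 * bf v (e s *m P w)) *: (e s *m P w).
Proof.
rewrite !mulmxA refl_act mulmxBl -scalemxAl -(mulmxA v) P_revK mulmx1.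
by rewrite -(bf_P _ _ w) -mulmxA P_revK mulmx1.
Qed.

Lemma count_lt (T : eqType) (p1 p2 : pred T) (L : seq T) x :
  (forall y, p1 y -> p2 y) -> x \in L -> p2 x -> ~~ p1 x ->
  (count p1 L < count p2 L)%N.
Proof.
move=> sub; elim: L => // y L IH; rewrite inE => /orP [/eqP <-|xL] p2x p1x /=.
  rewrite p2x (negbTE p1x) add0n add1n ltnS; exact: sub_count.
have := IH xL p2x p1x; have := sub y.
case: (p1 y); case: (p2 y) => //=; try lia.
Qed.


Section Para.
Variable J : {set 'I_n}.
Variable l : seq 'M[R]_n.
Hypothesis Hl : forall g, inG m g -> g \in l.

Let L := [seq e s *m g | s <- enum 'I_n, g <- l].
Let mu (b : 'rV[R]_n) := count (fun c => ht c < ht b) L.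

Lemma memL s w : e s *m P w \in L.
Proof.
apply: (allpairs_f (fun s g => e s *m g)); first by rewrite mem_enum.
apply: Hl; exists w; split => //; apply/allP => x _; exact: in_setT.
Qed.

Lemma para_pos N : forall s w, (mu (e s *m P w) < N)%N -> nonneg (e s *m P w) ->
  in_VJ J (e s *m P w) -> inGJ m J (P (rev w) *m r s *m P w).
Proof.
elim: N => // N IH s w Hmu Hpos HVJ.
move: Hmu Hpos HVJ; set β := e s *m P w => Hmu Hpos HVJ.
have b1 : bf β β = 1 by rewrite /β bf_P bf_ess.
have βE : e s *m P w = β by [].
clearbody β.
have [u [bu bb]] : exists u, 0 < β 0 u /\ 0 < bf β (e u).
  apply: Classical_Prop.NNPP => H.
  have : \sum_u β 0 u * bf β (e u) <= \sum_(u : 'I_n) (0:R).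
    apply: ler_sum => u _.
    have [->|bu'] := eqVneq (β 0 u) 0; first by rewrite mul0r.
    have bpos : 0 < β 0 u by rewrite lt_def bu' Hpos.
    rewrite pmulr_rle0 // leNgt; apply/negP => h; apply: H; by exists u.
  rewrite big1_eq -bf_self b1; lra.
have uJ : u \in J by apply/negPn/negP => nuJ; move: bu; rewrite HVJ // ltxx.
case: (eqVneq β (e u)) => [Be|Bne].
  have -> : P (rev w) *m r s *m P w = r u.
    by apply: mx_rowsP => v; rewrite conjP βE Be refl_act.
  exact: GJ_r.
have [v [vu bv]] : exists v, v != u /\ β 0 v != 0.
  apply: Classical_Prop.NNPP => H; move/eqP: Bne; apply.
  have Bu : β = β 0 u *: e u.
    apply/rowP => i; rewrite [in RHS]mxE [e u 0 i]mxE /=.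
    case: (eqVneq i u) => [->|iu]; first by rewrite mulr1.
    rewrite mulr0; apply: Classical_Prop.NNPP => h; apply: H; exists i; split => //.
    by apply/eqP.
  have h2 : β 0 u ^+ 2 = 1 by rewrite -b1 [in RHS]Bu bfZl bfZr bf_ess mulr1 expr2.
  have b1' : β 0 u = 1 by nra.
  by rewrite [LHS]Bu b1' scale1r.
pose γ := e s *m P (rcons w u).
have gE : γ = β - (2 * bf β (e u)) *: e u by rewrite /γ P_rcons mulmxA βE refl_act.
have gv : γ 0 v = β 0 v.
  by rewrite gE !mxE /= (negbTE vu) mulr0 subr0.
have gpos : nonneg γ.
  case: (root_sign s (rcons w u)) => // Hn; exfalso.
  have := Hn v; rewrite -/γ gv => h1; have h2 := Hpos v.
  by move/eqP: bv; apply; apply/eqP; rewrite eq_le h1 h2.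
have gVJ : in_VJ J γ by rewrite gE; apply: VJB => //; apply/VJZ/VJ_e.
have hlt : ht γ < ht β by rewrite /γ P_rcons mulmxA βE ht_refl; lra.
have mlt : (mu γ < mu β)%N.
  apply: (count_lt (x := γ)) => //=.
  - by move=> c /= /lt_trans; apply.
  - exact: memL.
  - by rewrite ltxx.
have := IH s (rcons w u) _ gpos gVJ.
rewrite rev_rcons P_cons P_rcons => Hg.
have -> : P (rev w) *m r s *m P w = r u *m (r u *m P (rev w) *m r s *m (P w *m r u)) *m r u.
  by rewrite !mulmxA refl_invol mul1mx -!mulmxA refl_invol mulmx1.
apply: GJ_mul; [apply: GJ_mul; [exact: GJ_r|]|exact: GJ_r].
apply: Hg; rewrite -P_rcons; exact: (leq_trans mlt Hmu).
Qed.

Lemma para s w : in_VJ J (e s *m P w) -> inGJ m J (P (rev w) *m r s *m P w).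
Proof.
move=> H; case: (root_sign s w) => Hs.
  exact: (@para_pos (mu (e s *m P w)).+1).
have := @para_pos (mu (e s *m P (s :: w))).+1 s (s :: w) (ltnSn _).
rewrite P_cons mulmxA refl_e mulNmx rev_cons P_rcons.
have Hn : nonneg (- (e s *m P w)) by move=> i; rewrite mxE oppr_ge0.
move/(_ Hn (VJN H)).
by rewrite -(mulmxA _ (r s) (r s)) refl_invol mulmx1 !mulmxA.
Qed.


Lemma conj_in sigma ws w : all (fun s => s \in J) ws -> sigma = P ws ->
  (forall v, in_VJ J v -> v *m sigma = - v) ->
  P w *m sigma = sigma *m P w ->
  forall wh, all (fun s => s \in J) wh -> inGJ m J (P (rev w) *m P wh *m P w).
Proof.
move=> wsJ sE sneg Hc; elim => [|x wh IH] /=.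
  by move=> _; rewrite P_nil mulmx1 P_revK; exists [::]; rewrite big_nil.
case/andP => xJ whJ.
have -> : P (rev w) *m P (x :: wh) *m P w =
    (P (rev w) *m r x *m P w) *m (P (rev w) *m P wh *m P w).
  by rewrite P_cons !mulmxA -(mulmxA _ (P w)) P_Krev mulmx1.
apply: GJ_mul; last exact: IH.
apply: para; apply: (@neg_VJ J ws) => //.
by rewrite -sE -mulmxA Hc mulmxA (sneg _ (VJ_e xJ)) mulNmx.
Qed.

Lemma dir1 sigma g : is_sigmaJ m J sigma -> inG m g -> g *m sigma = sigma *m g ->
  forall h : 'M[R]_n, inGJ m J h <->
       exists h' : 'M[R]_n, inGJ m J h' /\ h = g *m h' *m invmx g.
Proof.
move=> [[ws [wsJ sE]] sneg] [wg [_ gE]] Hc.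
rewrite -/(P ws) in sE; rewrite -/(P wg) in gE.
have ginv : invmx g = P (rev wg) by rewrite gE invmx_P.
have Hc1 : P wg *m sigma = sigma *m P wg by rewrite -gE.
have Hc2 : P (rev wg) *m sigma = sigma *m P (rev wg).
  rewrite -[LHS]mulmx1 -(P_Krev wg) !mulmxA -(mulmxA _ sigma) -Hc1 mulmxA P_revK mul1mx //.
move=> h; split.
  move=> [wh [whJ hE]]; rewrite -/(P wh) in hE.
  exists (P (rev wg) *m P wh *m P wg); split; first exact: (conj_in wsJ sE sneg Hc1).
  by rewrite ginv gE !mulmxA P_Krev mul1mx -mulmxA P_Krev mulmx1.
move=> [h' [[wh [whJ ->]] ->]]; rewrite -/(P wh) ginv gE.
have := conj_in wsJ sE sneg Hc2 whJ; by rewrite revK.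
Qed.

End Para.

End Cox.

Theorem proposition7 (R : realType) (n : nat) (m : 'I_n -> 'I_n -> nat)
  (J : {set 'I_n}) (sigma : 'M[R]_n) :
  coxeter_matrix m -> finite_coxeter R m ->
  is_sigmaJ m J sigma ->
  forall g : 'M[R]_n, inG m g ->
    (g *m sigma = sigma *m g <->
     forall h : 'M[R]_n, inGJ m J h <->
       exists h' : 'M[R]_n, inGJ m J h' /\ h = g *m h' *m invmx g).
Proof.
move=> Hm [l Hl] Hs g Hg; split.
  by move=> Hc; exact: (dir1 Hm Hl Hs Hg Hc).
exact: (dir2 Hm Hs Hg).
Qed.
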